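(* Let $\langle N,P,c,b,\mathcal{A}\rangle$ be any PB instance and let $S$ be the output of the algorithm Ordered-Relax on it. Then $S$ is feasible ($c(S)\le b$) and $$ALG\ \ge\ OPT-\frac{|A_j\setminus S|}{|S\setminus A_j|}\,(b-OPT),$$ where $j\in\arg\min_{i\in N}c(A_i\cap S)$, $ALG=c(A_j\cap S)$, and $OPT=\max_{T\subseteq P,\,c(T)\le b}\min_{i\in N}c(T\cap A_i)$ is the minimum utility in an optimal MPB solution.
   Context: A PB instance is $\langle N,P,c,b,\mathcal{A}\rangle$ with voters $N=\{1,\dots,n\}$, projects $P=\{p_1,\dots,p_m\}$, costs $c:P\to\mathbb{N}$, budget $b\in\mathbb{N}$, and approval sets $A_i\subseteq P$. $c(S)=\sum_{p\in S}c(p)$; $S$ is feasible if $c(S)\le b$. Algorithm Ordered-Relax: compute an optimal solution $(q^*,x^* )$ of the linear program: maximize $q$ subject to $q\le\sum_{p\in A_i}c(p)x_p$ for all $i\in N$, $\sum_{p\in P}c(p)x_p\le b$, $0\le x_p\le 1$ for all $p\in P$, $q\ge 0$. Then order the projects in non-increasing order of $c(p)x^*_p$ (ties broken arbitrarily), start with $S=\emptyset$, and add projects to $S$ in this order, stopping as soon as the next project in the order does not fit within the remaining budget (i.e., would make $c(S)$ exceed $b$); output $S$. *)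

(* Defs.v *)
From HB Require Import structures.
From mathcomp Require Import all_boot all_order all_algebra.
Set Implicit Arguments. Unset Strict Implicit. Unset Printing Implicit Defensive.
Import Order.TTheory GRing.Theory Num.Theory.

Section PB.
Variables (N P : finType) (c : P -> nat) (b : nat) (A : N -> {set P}).

Definition cost (S : {set P}) : nat := \sum_(p in S) c p.
Definition feasible (S : {set P}) : bool := cost S <= b.
Definition util (i : N) (S : {set P}) : nat := cost (A i :&: S).
(* min_{i in N} c(T ∩ A_i); (c(T) is a harmless neutral element, an upper bound
   on every util) *)
Definition minutil (T : {set P}) : nat := \big[minn/cost T]_(i : N) util i T.
Definition OPT : nat := \max_(T : {set P} | feasible T) minutil T.

Local Open Scope ring_scope.
Definition lp_feasible (R : realFieldType) (q : R) (x : P -> R) : Prop :=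
  [/\ 0 <= q,
      (forall i : N, q <= \sum_(p in A i) (c p)%:R * x p),
      \sum_(p : P) (c p)%:R * x p <= b%:R
    & (forall p, 0 <= x p <= 1)].
Definition lp_optimal (R : realFieldType) (q : R) (x : P -> R) : Prop :=
  lp_feasible q x /\ (forall q' x', lp_feasible q' x' -> q' <= q).

Definition relax_order (R : realFieldType) (x : P -> R) (ord : seq P) : Prop :=
  perm_eq ord (enum P) /\
  sorted (fun p p' => (c p')%:R * x p' <= (c p)%:R * x p) ord.
Local Close Scope ring_scope.

Fixpoint greedy_prefix (rem : nat) (s : seq P) : seq P :=
  match s with
  | [::] => [::]
  | p :: s' => if c p <= rem then p :: greedy_prefix (rem - c p) s' else [::]
  end.
Definition ordered_relax_output (ord : seq P) : {set P} :=
  [set p in greedy_prefix b ord].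
End PB.

(* Main.v *)
Require Import Defs.
From HB Require Import structures.
From mathcomp Require Import all_boot all_order all_algebra.
From mathcomp Require Import zify ring lra.
Import Order.TTheory GRing.Theory Num.Theory.
Local Open Scope ring_scope.

Section Aux.
Variables (P : finType) (c : P -> nat).

Lemma greedy_sub rem (s : seq P) : {subset greedy_prefix c rem s <= s}.
Proof.
elim: s rem => [|a s IH] rem //=.
case: ifP => _ //= p; rewrite !inE; case/orP=> [->//|/IH ->]; by rewrite orbT.
Qed.

Lemma greedy_uniq rem (s : seq P) : uniq s -> uniq (greedy_prefix c rem s).
Proof.
elim: s rem => [|a s IH] rem //= /andP[ha hs].
case: ifP => _ //=; rewrite IH // andbT.
by apply/negP => /greedy_sub; rewrite (negbTE ha).
Qed.

Lemma greedy_cost rem (s : seq P) : (\sum_(p <- greedy_prefix c rem s) c p <= rem)%N.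
Proof.
elim: s rem => [|a s IH] rem /=; first by rewrite big_nil.
case: ifP => h; last by rewrite big_nil.
rewrite big_cons; have := IH (rem - c a)%N; lia.
Qed.

Lemma greedy_order (e : rel P) rem (s : seq P) : transitive e -> sorted e s ->
  forall p p', p \in greedy_prefix c rem s -> p' \in s ->
  p' \notin greedy_prefix c rem s -> e p p'.
Proof.
move=> tr; elim: s rem => [|a s IH] rem //= hs p p'.
case: ifP => _ //= hp hp' hn.
have hp's : p' \in s.
  move: hp' hn; rewrite !inE; case/orP=> [/eqP->|->//]; by rewrite eqxx.
move: hp; rewrite inE; case/orP=> [/eqP->|hp].
  by have /allP := order_path_min tr hs; apply.
apply: (IH (rem - c a)%N) => //; first exact: path_sorted hs.
by move: hn; rewrite inE negb_or => /andP[].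
Qed.
End Aux.


Theorem lemma1 (R : realFieldType) (N P : finType) (c : P -> nat) (b : nat)
    (A : N -> {set P}) (q : R) (x : P -> R) (ord : seq P) :
  lp_optimal c b A q x ->
  relax_order c x ord ->
  let S := ordered_relax_output c b ord in
  (cost c S <= b)%N /\
  (forall j : N, (forall i : N, (util c A j S <= util c A i S)%N) ->
     (0 < #|S :\: A j|)%N ->
     (OPT c b A)%:R
       - (#|A j :\: S|%:R / #|S :\: A j|%:R) * (b%:R - (OPT c b A)%:R)
     <= (util c A j S)%:R :> R).
Proof.
move=> [[q0 hqA hsum hx] hopt] [hperm hsorted] S.
have ordP : forall p, p \in ord by move=> p; rewrite (perm_mem hperm) mem_enum.
have guniq : uniq (greedy_prefix c b ord).
  by apply: greedy_uniq; rewrite (perm_uniq hperm) enum_uniq.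
have SE : forall p, (p \in S) = (p \in greedy_prefix c b ord).
  by move=> p; rewrite /S /ordered_relax_output inE.
split.
  rewrite /cost (eq_bigl (fun p => p \in greedy_prefix c b ord)); last by move=> p; rewrite SE.
  by rewrite -big_uniq //; apply: greedy_cost.
move=> j _ hk.
set v := fun p => (c p)%:R * x p.
have v0 : forall p, 0 <= v p by move=> p; rewrite /v mulr_ge0 //; case/andP: (hx p).
have hOPT : (OPT c b A)%:R <= q.
  rewrite /OPT; elim/big_ind: _ => //.
    by move=> m n hm hn; rewrite /maxn; case: ifP.
  move=> T hT.
  pose x' := fun p => if p \in T then 1 else 0 : R.
  apply: (hopt _ x'); split => //.
  - move=> i.
    have -> : \sum_(p in A i) (c p)%:R * x' p = (util c A i T)%:R.
      rewrite /util /cost natr_sum big_mkcond [RHS]big_mkcond /=.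
      apply: eq_bigr => p _; rewrite /x' inE; case: (p \in A i); case: (p \in T) => /=;
        by rewrite ?mulr1 ?mulr0.
    rewrite ler_nat /minutil.
    rewrite unlock /=; have : i \in index_enum N by rewrite mem_index_enum.
    elim: (index_enum N) => [|a r IH] //=; rewrite inE.
    case/orP=> [/eqP<-|/IH h]; first exact: geq_minl.
    by rewrite geq_min h orbT.
  - have -> : \sum_p (c p)%:R * x' p = (cost c T)%:R.
      rewrite /cost natr_sum [RHS]big_mkcond /=.
      apply: eq_bigr => p _; rewrite /x'; case: (p \in T);
        by rewrite ?mulr1 ?mulr0.
    by rewrite ler_nat.
  - by move=> p; rewrite /x'; case: (p \in T); rewrite ?lexx ?ler01.
have hord : forall p p', p \in S -> p' \notin S -> v p' <= v p.
  move=> p p'; rewrite !SE => hp hp'.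
  have tr : transitive (fun p p' : P => v p' <= v p).
    by move=> y z w /= h1 h2; apply: le_trans h2 h1.
  exact (@greedy_order P c _ b ord tr hsorted p p' hp (ordP p') hp').
set k := #|S :\: A j|; set m := #|A j :\: S|.
have hk' : 0 < k%:R :> R by rewrite ltr0n.
have hSA : \sum_(p in S :\: A j) v p <= b%:R - q.
  have h1 : \sum_p v p = \sum_(p in A j) v p + \sum_(p in ~: A j) v p.
    rewrite (bigID (fun p => p \in A j)) /=; congr (_ + _).
    by apply: eq_bigl => p; rewrite inE.
  have h2 : \sum_(p in S :\: A j) v p <= \sum_(p in ~: A j) v p.
    rewrite [X in _ <= X](bigID (fun p => p \in S)) /= -[X in X <= _]addr0.
    apply: lerD; last by apply: sumr_ge0.
    by rewrite le_eqVlt; apply/orP; left; apply/eqP; apply: eq_bigl => p;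
      rewrite !inE andbC.
  have := hqA j; rewrite -/v => h3.
  move: hsum; rewrite -/v h1 => h4. 
  by rewrite lerBrDl; apply: le_trans (lerD h3 h2) h4.
have hel : forall p, p \in A j :\: S -> v p <= (b%:R - q) / k%:R.
  move=> p; rewrite inE => /andP[hpS _].
  rewrite ler_pdivlMr // mulrC; apply: le_trans hSA.
  rewrite mulr_natl -sumr_const; apply: ler_sum => p'; rewrite inE => /andP[_ hp'].
  exact: hord.
have hAS : \sum_(p in A j :\: S) v p <= m%:R * ((b%:R - q) / k%:R).
  rewrite mulr_natl -sumr_const; exact: ler_sum.
have hAiS : \sum_(p in A j :&: S) v p <= (util c A j S)%:R.
  rewrite /util /cost natr_sum; apply: ler_sum => p _.
  by rewrite /v ler_piMr //; case/andP: (hx p).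
have hAj : \sum_(p in A j) v p = \sum_(p in A j :&: S) v p + \sum_(p in A j :\: S) v p.
  rewrite (bigID (fun p => p \in S)) /=; congr (_ + _); apply: eq_bigl => p;
    by rewrite !inE // andbC.
have := hqA j; rewrite -/v hAj => hq.
have hr : 0 <= m%:R / k%:R :> R by rewrite divr_ge0.
set O := (OPT c b A)%:R : R.
set r := m%:R / k%:R : R.
have e1 : m%:R * ((b%:R - q) / k%:R) = r * (b%:R - q) by rewrite /r mulrA mulrAC.
have : O - r * (b%:R - O) <= q - r * (b%:R - q).
  rewrite -subr_ge0.
  have -> : q - r * (b%:R - q) - (O - r * (b%:R - O)) = (q - O) * (1 + r) by ring.
  by rewrite mulr_ge0 // ?subr_ge0 // addr_ge0.
move=> hh; apply: le_trans hh _.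
rewrite lerBlDr; apply: le_trans hq _; rewrite -e1; exact: lerD.
Qed.
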